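(* For every integer $m\ge2$, $$\sum_{k=1}^\infty\frac{\binom{2k}{m}}{5^k(2k-1)k^2(2k+1)}=\frac{2(-1)^m}{m}\ln\frac54-(-1)^m2\sqrt5\ln\alpha+\frac{F_{m-1}}{m-1}\frac{1}{2^{m-1}}+\frac{F_m}{m}\frac1{2^m}$$ $$+\frac2m\sum_{j=1}^{\lfloor (m-1)/2\rfloor}\frac{L_{m-2j}}{m-2j}\frac{1}{2^{m-2j}}-\frac2m\sum_{j=1}^{\lceil (m-1)/2\rceil}\frac{L_{m-2j+1}}{m-2j+1}\frac{1}{2^{m-2j+1}}$$ $$-5\sum_{j=0}^{\lfloor (m-1)/2\rfloor}\frac{F_{m-2j}}{m-2j}\frac{1}{2^{m-2j}}+5\sum_{j=1}^{\lceil (m-1)/2\rceil}\frac{F_{m-2j+1}}{m-2j+1}\frac{1}{2^{m-2j+1}}.$$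
   Context: $F_n=(\alpha^n-\beta^n)/(\alpha-\beta)$ and $L_n=\alpha^n+\beta^n$ are the Fibonacci and Lucas numbers, with $\alpha=(1+\sqrt5)/2$, $\beta=(1-\sqrt5)/2$. Empty sums are $0$. *)

(* Defs.v *)
From Stdlib Require Import Reals Lra Lia List.
From Coquelicot Require Import Coquelicot.
Open Scope R_scope.

Definition alpha : R := (1 + sqrt 5) / 2.
Definition beta  : R := (1 - sqrt 5) / 2.

Definition Fib (n : nat) : R := (alpha ^ n - beta ^ n) / (alpha - beta).
Definition Luc (n : nat) : R := alpha ^ n + beta ^ n.

Fixpoint binom (n k : nat) : nat :=
  match n, k with
  | _, O => 1%nat
  | O, S _ => 0%nat
  | S n', S k' => (binom n' k' + binom n' k)%nat
  end.

(* sum_{j=a}^{b} f j, empty (= 0) when b < a *)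
Definition sumRange (a b : nat) (f : nat -> R) : R :=
  fold_right Rplus 0 (map f (seq a (S b - a))).

Definition term19 (m k : nat) : R :=
  INR (binom (2 * k) m) /
    (5 ^ k * (2 * INR k - 1) * (INR k) ^ 2 * (2 * INR k + 1)).

Definition rhs19 (m : nat) : R :=
  let M := INR m in
  2 * (-1) ^ m / M * ln (5 / 4)
  - (-1) ^ m * 2 * sqrt 5 * ln alpha
  + Fib (m - 1) / INR (m - 1) * / 2 ^ (m - 1)
  + Fib m / M * / 2 ^ m
  + 2 / M * sumRange 1 ((m - 1) / 2)
        (fun j => Luc (m - 2 * j) / INR (m - 2 * j) * / 2 ^ (m - 2 * j))
  - 2 / M * sumRange 1 (m / 2)
        (fun j => Luc (m - 2 * j + 1) / INR (m - 2 * j + 1) * / 2 ^ (m - 2 * j + 1))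
  - 5 * sumRange 0 ((m - 1) / 2)
        (fun j => Fib (m - 2 * j) / INR (m - 2 * j) * / 2 ^ (m - 2 * j))
  + 5 * sumRange 1 (m / 2)
        (fun j => Fib (m - 2 * j + 1) / INR (m - 2 * j + 1) * / 2 ^ (m - 2 * j + 1)).

(* Main.v *)
Require Import Defs.
From Stdlib Require Import Reals Lra Lia List.
From Coquelicot Require Import Coquelicot.
Open Scope R_scope.

Lemma binom_gt n k : (n < k)%nat -> binom n k = 0%nat.
Proof.
  revert k; induction n; intros k H; destruct k; simpl; try lia; auto.
  rewrite IHn by lia. rewrite IHn by lia. reflexivity.
Qed.

Lemma binom_0r n : binom n 0 = 1%nat.
Proof. destruct n; reflexivity. Qed.

Lemma binom_absorb n k : (binom (S n) (S k) * S k = S n * binom n k)%nat.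
Proof.
  revert k; induction n; intros k.
  - destruct k; simpl; reflexivity.
  - destruct k.
    + specialize (IHn 0%nat). change (binom (S (S n)) 1) with (binom (S n) 0 + binom (S n) 1)%nat.
      rewrite !binom_0r in *. rewrite !Nat.mul_1_r in *. rewrite IHn. reflexivity.
    + change (binom (S (S n)) (S (S k))) with (binom (S n) (S k) + binom (S n) (S (S k)))%nat.
      assert (H3 : binom (S n) (S k) = (binom n k + binom n (S k))%nat) by reflexivity.
      pose proof (IHn k). pose proof (IHn (S k)). nia.
Qed.

Lemma hockey j n : sum_f_R0 (fun k => INR (binom k j)) n = INR (binom (S n) (S j)).
Proof.
  induction n.
  - simpl. rewrite Nat.add_0_r. reflexivity.
  - rewrite tech5, IHn. change (binom (S (S n)) (S j)) with (binom (S n) j + binom (S n) (S j))%nat.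
    rewrite plus_INR. ring.
Qed.

Lemma is_series_pair (a : nat -> R) l : is_series a l ->
  is_series (fun p => a (2*p)%nat + a (S (2*p))) l.
Proof.
  intros H.
  assert (E : forall N, sum_n (fun p => a (2*p)%nat + a (S (2*p))) N = sum_n a (S (2*N))).
  { induction N.
    - rewrite sum_Sn, !sum_O. reflexivity.
    - rewrite sum_Sn, IHN. replace (S (2 * S N)) with (S (S (S (2*N)))) by lia.
      rewrite !sum_Sn. replace (2 * S N)%nat with (S (S (2*N))) by lia.
      simpl. change plus with Rplus. ring. }
  assert (H2 : is_lim_seq (sum_n a) l) by exact H.
  assert (H3 := is_lim_seq_subseq (sum_n a) l (fun N => S (2*N)) ).
  unfold is_series. eapply filterlim_ext. intros N; symmetry; apply E.
  apply H3; [|exact H2].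
  intros P [N HN]. exists N. intros n Hn. apply HN. lia.
Qed.

Definition Bt (j : nat) (z : R) (n : nat) : R := INR (binom n j) * z ^ n.

Lemma Bt_abs j z n : Rabs (Bt j z n) = Bt j (Rabs z) n.
Proof.
  unfold Bt. rewrite Rabs_mult, RPow_abs, Rabs_pos_eq; [reflexivity| apply pos_INR].
Qed.

Lemma B_series j : forall z, Rabs z < 1 -> is_series (Bt j z) (z ^ j / (1 - z) ^ (S j)).
Proof.
  induction j; intros z Hz.
  - apply is_series_ext with (fun n => z ^ n).
    + intros n; unfold Bt; rewrite binom_0r; simpl; ring.
    + replace (z ^ 0 / (1 - z) ^ 1) with (/ (1 - z)); [exact (is_series_geom z Hz)|].
      simpl. field. intros H. assert (z = 1) by lra. subst. rewrite Rabs_R1 in Hz. lra.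
  - assert (Hz1 : 1 - z <> 0).
    { intros H. assert (z = 1) by lra. subst. rewrite Rabs_R1 in Hz. lra. }
    assert (Ha : Rabs (Rabs z) < 1) by (rewrite Rabs_Rabsolu; exact Hz).
    assert (HM := is_series_mult (Bt j z) (fun n => z ^ n) _ _ (IHj z Hz) (is_series_geom z Hz)).
    assert (HM2 : is_series (fun n => sum_f_R0 (fun k => Bt j z k * z ^ (n - k)) n)
                   (z ^ j / (1 - z) ^ S j * / (1 - z))).
    { apply HM.
      - eapply ex_intro. eapply is_series_ext; [|apply (IHj _ Ha)]. intros n; symmetry; apply Bt_abs.
      - eapply ex_intro. eapply is_series_ext; [|apply (is_series_geom _ Ha)].
        intros n; simpl; rewrite RPow_abs; reflexivity. }
    assert (E : forall n, sum_f_R0 (fun k => Bt j z k * z ^ (n - k)) n = z ^ n * INR (binom (S n) (S j))).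
    { intros n. rewrite <- hockey. rewrite scal_sum.
      apply sum_eq. intros i Hi. unfold Bt.
      replace (z ^ n) with (z ^ i * z ^ (n - i)) by (rewrite <- pow_add; f_equal; lia). ring. }
    apply is_series_decr_1.
    assert (Ha0 : Bt (S j) z 0 = 0) by (unfold Bt; simpl; ring).
    rewrite Ha0. change (plus (z ^ S j / (1 - z) ^ S (S j)) (opp 0)) with (z ^ S j / (1 - z) ^ S (S j) + - 0).
    replace (z ^ S j / (1 - z) ^ S (S j) + - 0) with (z * (z ^ j / (1 - z) ^ S j * / (1 - z))).
    2:{ simpl. field. split; auto. apply pow_nonzero; auto. }
    eapply is_series_ext; [|apply (is_series_scal_l z _ _ HM2)].
    intros n. cbv beta. rewrite E. unfold Bt. simpl. change (scal z (z ^ n * INR (binom n j + binom n (S j))))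
      with (z * (z ^ n * INR (binom n j + binom n (S j)))). ring.
Qed.

Definition lna (n : nat) : R := match n with O => 0 | S k => / INR (S k) end.

Lemma CV_lna : CV_radius lna = 1.
Proof.
  rewrite <- CV_radius_derive.
  rewrite (CV_radius_ext _ (fun _ => 1)).
  2:{ intros n. unfold PS_derive, lna. field. apply not_0_INR. lia. }
  replace (Finite 1) with (Finite (/ 1)) by (f_equal; field).
  apply CV_radius_finite_DAlembert; [intros; lra| lra|].
  eapply is_lim_seq_ext; [|apply is_lim_seq_const]. intros n; simpl.
  rewrite Rdiv_1_l, Rinv_1, Rabs_R1. reflexivity.
Qed.

Lemma log_series z : Rabs z < 1 -> is_series (fun n => z ^ S n / INR (S n)) (- ln (1 - z)).
Proof.
  intros Hz.
  assert (Hr : forall t, Rabs t < 1 -> Rbar_lt (Rabs t) (CV_radius lna)) by (intros; rewrite CV_lna; simpl; auto).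
  assert (Hd : forall t, Rabs t < 1 -> is_derive (fun t => PSeries lna t + ln (1 - t)) t 0).
  { intros t Ht.
    assert (Ht1 : 0 < 1 - t) by (apply Rabs_def2 in Ht; lra).
    assert (HP : PSeries (PS_derive lna) t = / (1 - t)).
    { apply is_series_unique. apply is_series_ext with (fun n => t ^ n); [|apply (is_series_geom t Ht)].
      intros n. unfold PS_derive, lna. rewrite Rinv_r by (apply not_0_INR; lia). rewrite Rmult_1_l. reflexivity. }
    replace 0 with (PSeries (PS_derive lna) t + (-1) * / (1 - t)) by (rewrite HP; ring).
    apply (is_derive_plus (PSeries lna) (fun t => ln (1 - t))).
    - apply is_derive_PSeries. apply Hr; auto.
    - auto_derive; [lra|]. field. lra. }
  assert (Hc : PSeries lna z + ln (1 - z) = 0).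
  { destruct (MVT_cor4 (fun t => PSeries lna t + ln (1 - t)) (fun _ => 0) 0 (Rabs z)) with (b := z)
      as [c [Hc1 Hc2]].
    - intros c Hc. apply Hd. rewrite Rminus_0_r in Hc. lra.
    - rewrite Rminus_0_r. lra.
    - rewrite PSeries_0, Rminus_0_r, ln_1 in Hc1. simpl in Hc1. lra. }
  assert (HS : is_pseries lna z (PSeries lna z)).
  { apply PSeries_correct. apply CV_radius_inside. apply Hr; auto. }
  replace (- ln (1 - z)) with (PSeries lna z) by lra.
  unfold is_pseries in HS.
  assert (E0 : plus (PSeries lna z) (scal (pow_n z 0) (lna 0)) = PSeries lna z).
  { change (PSeries lna z + 1 * 0 = PSeries lna z). ring. }
  rewrite <- E0 in HS.
  pose proof (@is_series_incr_1 R_AbsRing R_NormedModule (fun k => scal (pow_n z k) (lna k)) (PSeries lna z) HS) as HS2.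
  clear HS.
  eapply is_series_ext; [|exact HS2]. intros n. rewrite pow_n_pow.
    change (z ^ S n * / INR (S n) = z ^ S n / INR (S n)). reflexivity.
Qed.

Definition Gt (j : nat) (z : R) (n : nat) : R := INR (binom n j) * z ^ S n / INR (S n).

Fixpoint Gv (j : nat) (z : R) : R :=
  match j with
  | O => - ln (1 - z)
  | S j' => (z / (1 - z)) ^ S j' / INR (S j') - Gv j' z
  end.

Lemma binom_S_real n j :
  INR (binom n (S j)) = INR (S n) * INR (binom n j) / INR (S j) - INR (binom n j).
Proof.
  pose proof (binom_absorb n j) as H.
  assert (H2 : binom (S n) (S j) = (binom n j + binom n (S j))%nat) by reflexivity.
  rewrite H2 in H. apply (f_equal INR) in H. rewrite !mult_INR, plus_INR in H.
  assert (INR (S j) <> 0) by (apply not_0_INR; lia).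
  field_simplify_eq; auto. rewrite <- H. ring.
Qed.

Lemma iser (a b : nat -> R) (l l' : R) : is_series a l -> (forall n, a n = b n) -> l = l' -> is_series b l'.
Proof. intros H E E'. subst l'. exact (is_series_ext a b l E H). Qed.

Lemma iser_lin (a b : nat -> R) (la lb c d : R) : is_series a la -> is_series b lb ->
  is_series (fun n => c * a n + d * b n) (c * la + d * lb).
Proof.
  intros Ha Hb. exact (is_series_plus _ _ _ _ (is_series_scal_l c _ _ Ha) (is_series_scal_l d _ _ Hb)).
Qed.

Lemma G_series j : forall z, Rabs z < 1 -> is_series (Gt j z) (Gv j z).
Proof.
  induction j; intros z Hz.
  - apply is_series_ext with (fun n => z ^ S n / INR (S n)); [|apply log_series; auto].
    intros n. unfold Gt. rewrite binom_0r. change (INR 1) with 1. rewrite Rmult_1_l. reflexivity.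
  - assert (Hz1 : 1 - z <> 0).
    { intros H. assert (z = 1) by lra. subst. rewrite Rabs_R1 in Hz. lra. }
    eapply iser; [apply (iser_lin _ _ _ _ (z / INR (S j)) (-1) (B_series j z Hz) (IHj z Hz))| |].
    + intros n. unfold Gt, Bt. rewrite binom_S_real. rewrite <- tech_pow_Rmult. field. split; apply not_0_INR; lia.
    + change (Gv (S j) z) with ((z / (1 - z)) ^ S j / INR (S j) - Gv j z).
      unfold Rdiv at 4. rewrite Rpow_mult_distr, pow_inv. rewrite <- !tech_pow_Rmult. field.
      repeat split; auto; try (apply not_0_INR; lia); apply pow_nonzero; auto.
Qed.

Lemma shift_dn (a : nat -> R) (l : R) : a 0%nat = 0 -> is_series (fun n => a (S n)) l -> is_series a l.
Proof.
  intros H0 H. apply is_series_decr_1.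
  match goal with |- is_series _ ?L => replace L with l; [exact H|] end.
  rewrite H0. change (l = l + - 0). ring.
Qed.

Lemma shift_up (a : nat -> R) (l : R) : a 0%nat = 0 -> is_series a l -> is_series (fun n => a (S n)) l.
Proof.
  intros H0 H. apply (@is_series_incr_1 R_AbsRing R_NormedModule).
  match goal with |- is_series _ ?L => replace L with l; [exact H|] end.
  rewrite H0. change (l = l + 0). ring.
Qed.

Section W.
Variable p : nat.
Let m := S (S p).

Definition cw (n : nat) : R := -4 / (INR n) ^ 2 + 2 / (INR n - 1) - 2 / (INR n + 1).
Definition w (z : R) (n : nat) : R := INR (binom n m) * z ^ n * cw n.

Definition Vv (z : R) : R :=
  (INR (S p) * z * (z ^ S p / (1 - z) ^ S (S p)) + z ^ 2 * (z ^ p / (1 - z) ^ S p))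
  / (INR (S p) * INR (S (S p))).

Definition Fv (z : R) : R := -4 * (Gv (S p) z / INR m) + 2 * Vv z + -2 * (Gv m z / z).

Lemma a1_series z : Rabs z < 1 -> is_series (fun n => INR (binom n m) * z ^ n / (INR n) ^ 2) (Gv (S p) z / INR m).
Proof.
  intros Hz. apply shift_dn.
  - unfold m. simpl. unfold Rdiv. ring.
  - eapply iser; [apply (is_series_scal_r (/ INR m) _ _ (G_series (S p) z Hz))| |reflexivity].
    intros q. unfold Gt. pose proof (binom_absorb q (S p)) as H. apply (f_equal INR) in H.
    rewrite !mult_INR in H. unfold m.
    assert (INR (S q) <> 0) by (apply not_0_INR; lia).
    assert (INR (S (S p)) <> 0) by (apply not_0_INR; lia).
    rewrite <- tech_pow_Rmult. field_simplify_eq; auto.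
    replace (INR (binom (S q) (S (S p)))) with (INR (S q) * INR (binom q (S p)) / INR (S (S p))).
    2:{ rewrite <- H. field. auto. }
    field. auto.
Qed.

Lemma a2_series z : Rabs z < 1 -> is_series (fun n => INR (binom n m) * z ^ n / (INR n - 1)) (Vv z).
Proof.
  intros Hz. apply shift_dn; [unfold m; simpl; unfold Rdiv; ring|].
  apply shift_dn; [unfold m; rewrite (binom_gt 1 (S (S p))) by lia; simpl; unfold Rdiv; ring|].
  assert (HB1 : is_series (fun q => Bt (S p) z (S q)) (z ^ S p / (1 - z) ^ S (S p))).
  { apply shift_up; [unfold Bt; simpl; ring|apply B_series; auto]. }
  pose proof (B_series p z Hz) as HB0.
  assert (Hp1 : INR (S p) <> 0) by (apply not_0_INR; lia).
  assert (Hp2 : INR (S (S p)) <> 0) by (apply not_0_INR; lia).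
  eapply iser; [apply (iser_lin _ _ _ _ (INR (S p) * z / (INR (S p) * INR (S (S p))))
                                      (z ^ 2 / (INR (S p) * INR (S (S p)))) HB1 HB0)| |].
  - intros q. unfold Bt, m.
    pose proof (binom_absorb (S q) (S p)) as H2. pose proof (binom_absorb q p) as H1.
    apply (f_equal INR) in H1. apply (f_equal INR) in H2. rewrite !mult_INR in H1, H2.
    assert (Hq1 : INR (S q) <> 0) by (apply not_0_INR; lia).
    replace (INR (S (S q)) - 1) with (INR (S q)) by (rewrite (S_INR (S q)); ring).
    replace (INR (binom (S (S q)) (S (S p)))) with
      (INR (S q) * (INR (S p) * INR (binom (S q) (S p)) + INR (binom q p)) / (INR (S p) * INR (S (S p)))).
    2:{ apply (Rmult_eq_reg_r (INR (S (S p)))); auto. rewrite H2.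
        rewrite (S_INR (S q)). field_simplify; auto.
        replace (INR (binom q p)) with (INR (binom (S q) (S p)) * INR (S p) / INR (S q)).
        2:{ rewrite H1. field. auto. } field. auto. }
    rewrite <- !tech_pow_Rmult. field. auto.
  - assert (Hz1 : 1 - z <> 0) by (intros H; assert (z = 1) by lra; subst; rewrite Rabs_R1 in Hz; lra).
    unfold Vv. field. repeat split; auto; apply pow_nonzero; auto.
Qed.

Lemma a3_series z : Rabs z < 1 -> z <> 0 ->
  is_series (fun n => INR (binom n m) * z ^ n / (INR n + 1)) (Gv m z / z).
Proof.
  intros Hz Hz0.
  eapply iser; [apply (is_series_scal_r (/ z) _ _ (G_series m z Hz))| |reflexivity].
  intros n. unfold Gt. rewrite S_INR. rewrite <- tech_pow_Rmult. field. split; auto.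
  pose proof (pos_INR n). lra.
Qed.

Lemma w_series z : Rabs z < 1 -> z <> 0 -> is_series (w z) (Fv z).
Proof.
  intros Hz Hz0.
  eapply iser.
  - apply (iser_lin _ _ _ _ 1 (-2) (iser_lin _ _ _ _ (-4) 2 (a1_series z Hz) (a2_series z Hz))
                    (a3_series z Hz Hz0)).
  - intros n. unfold w, cw. unfold Rdiv. ring.
  - unfold Fv. ring.
Qed.
End W.

Fixpoint Pr (n : nat) (h : nat -> R) : R :=
  match n with O => 0 | S n' => h (S n') - Pr n' h end.

Lemma Pr_lin n f g c d : Pr n (fun i => c * f i + d * g i) = c * Pr n f + d * Pr n g.
Proof. induction n; simpl; [ring|]. rewrite IHn. ring. Qed.

Lemma Pr_ext n f g : (forall i, f i = g i) -> Pr n f = Pr n g.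
Proof. intros H; induction n; simpl; auto. rewrite IHn, H. reflexivity. Qed.

Lemma sumRange1_S K f : sumRange 1 (S K) f = f 1%nat + sumRange 1 K (fun j => f (S j)).
Proof.
  unfold sumRange. replace (S (S K) - 1)%nat with (S K) by lia. replace (S K - 1)%nat with K by lia.
  simpl. rewrite <- seq_shift, map_map. reflexivity.
Qed.

Lemma sumRange0 K f : sumRange 0 K f = f 0%nat + sumRange 1 K f.
Proof.
  unfold sumRange. replace (S K - 0)%nat with (S K) by lia. replace (S K - 1)%nat with K by lia.
  reflexivity.
Qed.

Lemma sumRange1_ext K f g : (forall j, (1 <= j <= K)%nat -> f j = g j) -> sumRange 1 K f = sumRange 1 K g.
Proof.
  intros H. unfold sumRange. replace (S K - 1)%nat with K by lia.
  f_equal. apply map_ext_in. intros j Hj. apply in_seq in Hj. apply H. lia.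
Qed.

Lemma parity n h :
  sumRange 1 (S n / 2) (fun j => h (S n - 2 * j + 1)%nat) - sumRange 1 (n / 2) (fun j => h (S n - 2 * j)%nat)
  = Pr n h.
Proof.
  induction n.
  - simpl. unfold sumRange. simpl. ring.
  - simpl Pr. rewrite <- IHn.
    assert (E : (S (S n) / 2 = S (n / 2))%nat).
    { replace (S (S n)) with (n + 1 * 2)%nat by lia. rewrite Nat.div_add by lia. lia. }
    rewrite E, sumRange1_S.
    replace (h (S (S n) - 2 * 1 + 1)%nat) with (h (S n)) by (f_equal; lia).
    rewrite (sumRange1_ext (n / 2) (fun j => h (S (S n) - 2 * S j + 1)%nat) (fun j => h (S n - 2 * j)%nat))
      by (intros j Hj; f_equal; assert (2 * (n / 2) <= n)%nat by (apply Nat.mul_div_le; lia); lia).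
    rewrite (sumRange1_ext (S n / 2) (fun j => h (S (S n) - 2 * j)%nat) (fun j => h (S n - 2 * j + 1)%nat)).
    + ring.
    + intros j Hj. f_equal. pose proof (Nat.mul_div_le (S n) 2). lia.
Qed.

Lemma s5 : sqrt 5 * sqrt 5 = 5.
Proof. apply sqrt_sqrt; lra. Qed.

Lemma s5_gt2 : 2 < sqrt 5.
Proof. pose proof s5. pose proof (sqrt_pos 5). nra. Qed.

Lemma Hx1 : Rabs (/ sqrt 5) < 1.
Proof.
  pose proof s5_gt2. rewrite Rabs_pos_eq by (left; apply Rinv_0_lt_compat; lra).
  apply (Rmult_lt_reg_l (sqrt 5)); [lra|]. rewrite Rinv_r by lra. lra.
Qed.

Lemma Hx2 : Rabs (- / sqrt 5) < 1.
Proof. rewrite Rabs_Ropp. exact Hx1. Qed.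

Lemma ya : / sqrt 5 / (1 - / sqrt 5) = alpha / 2.
Proof. pose proof s5_gt2. pose proof s5. unfold alpha. field_simplify_eq; [nra|lra]. Qed.

Lemma yb : - / sqrt 5 / (1 - - / sqrt 5) = beta / 2.
Proof. pose proof s5_gt2. pose proof s5. unfold beta. field_simplify_eq; [nra|lra]. Qed.

Lemma Gv_S j z : Gv (S j) z = (z / (1 - z)) ^ S j / INR (S j) - Gv j z.
Proof. reflexivity. Qed.

Lemma Gv_Pr j z : Gv j z = (-1) ^ j * Gv 0 z + Pr j (fun i => (z / (1 - z)) ^ i / INR i).
Proof.
  induction j; [simpl; ring|]. rewrite Gv_S, IHj.
  change (Pr (S j) (fun i => (z / (1 - z)) ^ i / INR i)) with
    ((z / (1 - z)) ^ S j / INR (S j) - Pr j (fun i => (z / (1 - z)) ^ i / INR i)).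
  rewrite <- (tech_pow_Rmult (-1) j). ring.
Qed.

Lemma HL_eq i : Luc i / INR i * / 2 ^ i = 1 * ((alpha / 2) ^ i / INR i) + 1 * ((beta / 2) ^ i / INR i).
Proof. unfold Luc, Rdiv. rewrite !Rpow_mult_distr, !pow_inv. ring. Qed.

Lemma HF_eq i : Fib i / INR i * / 2 ^ i = / sqrt 5 * ((alpha / 2) ^ i / INR i) + - / sqrt 5 * ((beta / 2) ^ i / INR i).
Proof.
  assert (E : alpha - beta = sqrt 5) by (unfold alpha, beta; field).
  unfold Fib. rewrite E. unfold Rdiv. rewrite !Rpow_mult_distr, !pow_inv. ring.
Qed.

Lemma ln54 : ln (5 / 4) = - (ln (1 - / sqrt 5) + ln (1 - - / sqrt 5)).
Proof.
  pose proof s5_gt2. pose proof s5.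
  assert (0 < / sqrt 5 < 1 / 2).
  { split; [apply Rinv_0_lt_compat; lra|]. apply (Rmult_lt_reg_l (sqrt 5)); [lra|]. rewrite Rinv_r by lra. lra. }
  rewrite <- ln_mult by lra.
  replace (5 / 4) with (/ ((1 - / sqrt 5) * (1 - - / sqrt 5))).
  - rewrite ln_Rinv; [ring|]. apply Rmult_lt_0_compat; lra.
  - field_simplify_eq; [nra|]. split; lra.
Qed.

Lemma lnalpha : ln alpha = (ln (1 - - / sqrt 5) - ln (1 - / sqrt 5)) / 2.
Proof.
  pose proof s5_gt2. pose proof s5.
  assert (0 < / sqrt 5 < 1 / 2).
  { split; [apply Rinv_0_lt_compat; lra|]. apply (Rmult_lt_reg_l (sqrt 5)); [lra|]. rewrite Rinv_r by lra. lra. }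
  assert (Ha : 0 < alpha) by (unfold alpha; lra).
  replace (1 - - / sqrt 5) with (alpha * alpha * (1 - / sqrt 5)).
  - rewrite !ln_mult by (try apply Rmult_lt_0_compat; lra). field.
  - unfold alpha. field_simplify_eq; [nra|lra].
Qed.

Lemma Vv_y p z : 1 - z <> 0 -> Vv p z =
  (INR (S p) * z * (z / (1 - z)) ^ S p + z ^ 2 * (z / (1 - z)) ^ p) / ((1 - z) * (INR (S p) * INR (S (S p)))).
Proof.
  intros Hz. unfold Vv. unfold Rdiv. rewrite !Rpow_mult_distr, !pow_inv.
  rewrite <- !tech_pow_Rmult. field.
  repeat split; auto; try (apply not_0_INR; lia); apply pow_nonzero; auto.
Qed.

Lemma x2 : (/ sqrt 5) ^ 2 = / 5.
Proof. pose proof s5_gt2. replace ((/ sqrt 5) ^ 2) with (/ (sqrt 5 * sqrt 5)) by (field; lra). rewrite s5. reflexivity. Qed.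

Lemma term_eq p k : / 2 * w p (/ sqrt 5) (2 * S k) + / 2 * w p (- / sqrt 5) (2 * S k) = term19 (S (S p)) (S k).
Proof.
  unfold w, term19. rewrite !pow_mult.
  replace ((- / sqrt 5) ^ 2) with ((/ sqrt 5) ^ 2) by ring. rewrite x2, pow_inv.
  unfold cw. rewrite mult_INR. change (INR 2) with 2.
  assert (HK : 1 <= INR (S k)) by (rewrite S_INR; pose proof (pos_INR k); lra).
  assert (5 ^ S k <> 0) by (apply pow_nonzero; lra).
  field. repeat split; try lra.
Qed.

Lemma odd_eq p k : / 2 * w p (/ sqrt 5) (S (2 * k)) + / 2 * w p (- / sqrt 5) (S (2 * k)) = 0.
Proof.
  unfold w. rewrite <- !tech_pow_Rmult, !pow_mult.
  replace ((- / sqrt 5) ^ 2) with ((/ sqrt 5) ^ 2) by ring. ring.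
Qed.

Lemma final_alg p : / 2 * Fv p (/ sqrt 5) + / 2 * Fv p (- / sqrt 5) = rhs19 (S (S p)).
Proof.
  pose proof s5_gt2 as Hs2. pose proof s5 as Hs.
  assert (Hx0 : / sqrt 5 <> 0) by (apply Rinv_neq_0_compat; lra).
  assert (Hx1 : 1 - / sqrt 5 <> 0).
  { intros H. assert (/ sqrt 5 = 1) by lra. assert (sqrt 5 = 1) by (rewrite <- (Rinv_inv (sqrt 5)), H0; apply Rinv_1). lra. }
  assert (Hx2 : 1 - - / sqrt 5 <> 0).
  { assert (0 < / sqrt 5) by (apply Rinv_0_lt_compat; lra). lra. }
  unfold Fv. rewrite !(Gv_S (S p)). rewrite !(Gv_Pr (S p)). rewrite !Vv_y by auto.
  rewrite ya, yb.
  unfold Gv.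
  cbv beta zeta delta [rhs19].
  replace (S (S p) - 1)%nat with (S p) by lia.
  rewrite sumRange0. replace (S (S p) - 2 * 0)%nat with (S (S p)) by lia.
  pose proof (parity (S p) (fun i => Luc i / INR i * / 2 ^ i)) as PL. cbv beta in PL.
  pose proof (parity (S p) (fun i => Fib i / INR i * / 2 ^ i)) as PF. cbv beta in PF.
  rewrite (Pr_ext _ _ _ HL_eq), Pr_lin in PL.
  rewrite (Pr_ext _ _ _ HF_eq), Pr_lin in PF.
  set (T2L := sumRange 1 (S (S p) / 2) (fun j : nat =>
       Luc (S (S p) - 2 * j + 1) / INR (S (S p) - 2 * j + 1) * / 2 ^ (S (S p) - 2 * j + 1))) in *.
  set (T1L := sumRange 1 (S p / 2) (fun j : nat =>
       Luc (S (S p) - 2 * j) / INR (S (S p) - 2 * j) * / 2 ^ (S (S p) - 2 * j))) in *.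
  set (T2F := sumRange 1 (S (S p) / 2) (fun j : nat =>
       Fib (S (S p) - 2 * j + 1) / INR (S (S p) - 2 * j + 1) * / 2 ^ (S (S p) - 2 * j + 1))) in *.
  set (T1F := sumRange 1 (S p / 2) (fun j : nat =>
       Fib (S (S p) - 2 * j) / INR (S (S p) - 2 * j) * / 2 ^ (S (S p) - 2 * j))) in *.
  assert (E1 : T2L = T1L + (1 * Pr (S p) (fun i : nat => (alpha / 2) ^ i / INR i) +
                            1 * Pr (S p) (fun i : nat => (beta / 2) ^ i / INR i))) by lra.
  assert (E2 : T2F = T1F + (/ sqrt 5 * Pr (S p) (fun i : nat => (alpha / 2) ^ i / INR i) +
                            - / sqrt 5 * Pr (S p) (fun i : nat => (beta / 2) ^ i / INR i))) by lra.
  rewrite E1, E2. clear E1 E2 PL PF.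
  rewrite !HF_eq. rewrite ln54, lnalpha.
  set (PA := Pr (S p) (fun i : nat => (alpha / 2) ^ i / INR i)).
  set (PB := Pr (S p) (fun i : nat => (beta / 2) ^ i / INR i)).
  rewrite <- !tech_pow_Rmult.
  set (A := (alpha / 2) ^ p). set (B := (beta / 2) ^ p). set (sg := (-1) ^ p).
  set (L1 := ln (1 - / sqrt 5)). set (L2 := ln (1 - - / sqrt 5)).
  rewrite !S_INR.
  unfold alpha, beta. set (s := sqrt 5) in *.
  assert (Hk : forall k, s ^ (S (S k)) = 5 * s ^ k) by (intros k; simpl; rewrite <- Hs; ring).
  field_simplify_eq.
  - rewrite !Hk. ring.
  - pose proof (pos_INR p). repeat split; lra.
Qed.

Theorem theorem19 (m : nat) (hm : (2 <= m)%nat) :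
  is_series (fun n : nat => term19 m (S n)) (rhs19 m).
Proof.
  destruct m as [|[|p]]; [lia|lia|].
  assert (Hx0 : / sqrt 5 <> 0) by (apply Rinv_neq_0_compat; pose proof s5_gt2; lra).
  assert (Hx0' : - / sqrt 5 <> 0) by (intros H; apply Hx0; lra).
  pose proof (iser_lin _ _ _ _ (/ 2) (/ 2) (w_series p _ Hx1 Hx0) (w_series p _ Hx2 Hx0')) as H.
  apply is_series_pair in H.
  apply shift_up in H.
  - eapply iser; [exact H| |apply final_alg].
    intros k. cbv beta. rewrite odd_eq, Rplus_0_r. apply term_eq.
  - cbv beta. unfold w. simpl. ring.
Qed.
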